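(* Let $\rho\colon\mathcal{F}\to[\Lambda]^\omega$ with $\mathcal{F}\subseteq[\Omega]^\omega$ be a partition regular function which has small accretions. Consider the conditions: (1) $\mathrm{FinBW}(\rho)$ coincides with the class of all compact metric spaces in the realm of metric spaces, i.e. a metric space belongs to $\mathrm{FinBW}(\rho)$ if and only if it is compact; (2) $[0,1]\in\mathrm{FinBW}(\rho)$; (3) $\rho_{\mathrm{conv}}\not\leq_K\rho$. Then (1) and (2) are equivalent and imply (3). If moreover $\rho\in P^-$, then (1), (2), (3) are all equivalent.
   Context: All topological spaces are Hausdorff. An ideal on a set $X$: $\mathcal{I}\subseteq\mathcal{P}(X)$ with $\emptyset\in\mathcal{I}$, $X\notin\mathcal{I}$, closed under finite unions and subsets, containing all finite sets; $\mathcal{I}^+=\mathcal{P}(X)\setminus\mathcal{I}$. Partition regular function: $\Lambda,\Omega$ countably infinite, $\mathcal{F}$ a nonempty family of infinite subsets of $\Omega$ with $F\setminus K\in\mathcal{F}$ for $F\in\mathcal{F}$, $K$ finite; $\rho\colon\mathcal{F}\to[\Lambda]^\omega$ is partition regular if (M) $E\subseteq F\Rightarrow\rho(E)\subseteq\rho(F)$; (R) if $F\in\mathcal{F}$ and $\rho(F)=A\cup B$ then some $E\in\mathcal{F}$ has $\rho(E)\subseteq A$ or $\rho(E)\subseteq B$; (S) for every $E\in\mathcal{F}$ there is $F\in\mathcal{F}$, $F\subseteq E$, such that every $a\in\rho(F)$ satisfies $a\notin\rho(F\setminus K)$ for some finite $K\subseteq\Omega$. $\mathcal{I}_\rho=\{A\subseteq\Lambda:\forall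 F\in\mathcal{F}\ \rho(F)\not\subseteq A\}$. For an ideal $\mathcal{I}$ on a countable set $\Lambda$, $\rho_{\mathcal{I}}\colon\mathcal{I}^+\to[\Lambda]^\omega$, $\rho_{\mathcal{I}}(A)=A$ (with $\Omega=\Lambda$). $\rho$ has small accretions: for every $E\in\mathcal{F}$ there is $F\in\mathcal{F}$, $F\subseteq E$, with $\rho(F)\setminus\rho(F\setminus K)\in\mathcal{I}_\rho$ for all finite $K\subseteq\Omega$. $\rho\in P^-$: for every decreasing $A_0\supseteq A_1\supseteq\dots$ of subsets of $\Lambda$ with $A_0\notin\mathcal{I}_\rho$ and $A_n\setminus A_{n+1}\in\mathcal{I}_\rho$, there is $F\in\mathcal{F}$ with $\rho(F)\subseteq A_0$ such that for each $n$ some finite $K\subseteq\Omega$ has $\rho(F\setminus K)\subseteq A_n$. $\rho$-convergence and $\mathrm{FinBW}(\rho)$: $f\restriction\rho(F)$ ($f\colon\Lambda\to X$, $F\in\mathcal{F}$) $\rho$-converges to $x$ if for every neighborhood $U$ of $x$ some finite $K\subseteq\Omega$ has $f[\rho(F\setminus K)]\subseteq U$; $\mathrm{FinBW}(\rho)$ is the class of spaces $X$ such that for every $f\colon\Lambda\to X$ some $F\in\mathcal{F}$ makes $f\restriction\rho(F)$ $\rho$-convergent to a point of $X$. Katětov order: $\rho_2\leq_K\rho_1$ if there is $f\colon\Lambda_1\to\Lambda_2$ such that for every $F_1\in\mathcal{F}_1$ there is $F_2\in\mathcal{F}_2$ such that for every finite $K_1\subseteq\Omega_1$ there is a finite $K_2\subseteq\Omega_2$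 with $\rho_2(F_2\setminus K_2)\subseteq f[\rho_1(F_1\setminus K_1)]$. $\mathrm{conv}$ is the ideal on $\mathbb{Q}\cap[0,1]$ of all sets covered by the ranges of finitely many sequences in $\mathbb{Q}\cap[0,1]$ convergent in $[0,1]$. *)

(* Defs.v *)
From HB Require Import structures.
From mathcomp Require Import all_boot all_order all_algebra.
From mathcomp Require Import all_classical all_reals all_analysis.
Set Implicit Arguments. Unset Strict Implicit. Unset Printing Implicit Defensive.
Import Order.TTheory GRing.Theory Num.Theory.
Import numFieldNormedType.Exports.
Local Open Scope classical_set_scope.
Local Open Scope ring_scope.

Section PRF.
Variables (Lam Om : Type).
(* A "partition regular function" is given by a family Fam of subsets of Om
   (its domain F) and a map rho (only its values on Fam matter). *)
Variables (Fam : set (set Om)) (rho : set Om -> set Lam).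

Definition partition_regular : Prop :=
  [/\ (exists F0, Fam F0),
      (forall F, Fam F -> infinite_set F),
      (forall F K, Fam F -> finite_set K -> Fam (F `\` K)) &
      (forall F, Fam F -> infinite_set (rho F))] /\
  [/\
      (forall E F, Fam E -> Fam F -> E `<=` F -> rho E `<=` rho F),
      (forall F A B, Fam F -> rho F = A `|` B ->
         exists2 E, Fam E & (rho E `<=` A \/ rho E `<=` B)) &
      (forall E, Fam E -> exists F, [/\ Fam F, F `<=` E &
         forall a, rho F a -> exists K, finite_set K /\ ~ rho (F `\` K) a])].

Definition I_rho : set (set Lam) :=
  [set A | forall F, Fam F -> ~ (rho F `<=` A)].

Definition small_accretions : Prop :=
  forall E, Fam E -> exists F, [/\ Fam F, F `<=` E &
    forall K, finite_set K -> I_rho (rho F `\` rho (F `\` K))].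

Definition P_minus : Prop :=
  forall A : nat -> set Lam,
    (forall n, A n.+1 `<=` A n) -> ~ I_rho (A 0%N) ->
    (forall n, I_rho (A n `\` A n.+1)) ->
    exists2 F, Fam F /\ rho F `<=` A 0%N &
      forall n, exists K, finite_set K /\ rho (F `\` K) `<=` A n.

Definition rho_converges (T : topologicalType) (f : Lam -> T) (F : set Om)
  (x : T) : Prop :=
  forall U, nbhs x U -> exists K, finite_set K /\ f @` rho (F `\` K) `<=` U.

Definition FinBW_on (T : topologicalType) (A : set T) : Prop :=
  forall f : Lam -> T, (forall l, A (f l)) ->
    exists F, Fam F /\ exists2 x, A x & rho_converges f F x.

Definition FinBW (T : topologicalType) : Prop := FinBW_on [set: T].
End PRF.

(* Katetov order rho2 <=_K rho1 *)
Definition katetov_le (Lam1 Om1 Lam2 Om2 : Type)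
  (Fam2 : set (set Om2)) (rho2 : set Om2 -> set Lam2)
  (Fam1 : set (set Om1)) (rho1 : set Om1 -> set Lam1) : Prop :=
  exists f : Lam1 -> Lam2, forall F1, Fam1 F1 -> exists2 F2, Fam2 F2 &
    forall K1, finite_set K1 -> exists K2, finite_set K2 /\
      rho2 (F2 `\` K2) `<=` f @` rho1 (F1 `\` K1).

(* rho_I for an ideal I on Lam: domain I^+, identity map, Om = Lam *)
Definition rho_ideal_dom (Lam : Type) (I : set (set Lam)) : set (set Lam) :=
  [set A | ~ I A].
Definition rho_ideal_map (Lam : Type) (A : set Lam) : set Lam := A.

Definition QI : Type := {q : rat | (0 <= q <= 1)%R}.

(* the ideal conv on Q cap [0,1]: sets covered by the ranges of finitely many
   sequences in Q cap [0,1] convergent in [0,1] (equivalently in R, as [0,1]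
   is closed) *)
Definition conv_ideal (R : realType) : set (set QI) :=
  [set A | exists (n : nat) (s : 'I_n -> nat -> QI),
     (forall i, exists l : R, (fun k => (ratr (sval (s i k)) : R)) @ \oo --> l)
     /\ A `<=` \bigcup_(i in [set: 'I_n]) range (s i)].

(* Main.v *)
Require Import Defs.
From HB Require Import structures.
From mathcomp Require Import all_boot all_order all_algebra.
From mathcomp Require Import all_classical all_reals all_analysis.
From mathcomp Require Import finmap.
From mathcomp Require Import lra.
Import Order.TTheory GRing.Theory Num.Theory.
Import numFieldNormedType.Exports.
Local Open Scope classical_set_scope.
Local Open Scope ring_scope.

Set Implicit Arguments. Unset Strict Implicit. Unset Printing Implicit Defensive.

Lemma finite_nat_bound (A : set nat) : finite_set A -> exists N, forall n, A n -> (n < N)%N.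
Proof.
move=> /finite_fsetP [X ->]; exists (\max_(x <- enum_fset X) x).+1 => n /= nX.
by rewrite ltnS; apply: (@leq_bigmax_seq _ _ predT id n).
Qed.

Section Irho.
Variables (Lam Om : Type) (Fam : set (set Om)) (rho : set Om -> set Lam).
Hypothesis Hpr : partition_regular Fam rho.

Lemma Irho_sub (A B : set Lam) : B `<=` A -> I_rho Fam rho A -> I_rho Fam rho B.
Proof. by move=> BA IA F FF rFB; apply: (IA F FF); apply: subset_trans BA. Qed.

Lemma Irho_U (A B : set Lam) : I_rho Fam rho A -> I_rho Fam rho B -> I_rho Fam rho (A `|` B).
Proof.
move=> IA IB F FF rFAB; case: Hpr => _ [_ HR _].
have e : rho F = (rho F `&` A) `|` (rho F `&` B).
  by rewrite -setIUr; apply/esym/setIidl.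
have [E FE [h|h]] := HR _ _ _ FF e.
- by apply: (IA E FE); apply: subset_trans h _; apply: subIsetr.
- by apply: (IB E FE); apply: subset_trans h _; apply: subIsetr.
Qed.

Lemma Irho_finite (A : set Lam) : finite_set A -> I_rho Fam rho A.
Proof.
move=> fA F FF rFA; case: Hpr => [[_ _ _ inf] _].
by apply: (inf F FF); apply: sub_finite_set fA.
Qed.

Lemma Irho0 : I_rho Fam rho set0.
Proof. exact/Irho_finite/finite_set0. Qed.

Lemma notIrhoP (A : set Lam) : ~ I_rho Fam rho A -> exists2 F, Fam F & rho F `<=` A.
Proof.
move=> nI; apply: contrapT => nex; apply: nI => F FF rFA; apply: nex; by exists F.
Qed.

Lemma notIrho_n0 (A : set Lam) : ~ I_rho Fam rho A -> A !=set0.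
Proof.
move=> nI; apply/set0P/negP => /eqP A0; apply: nI; rewrite A0; exact: Irho0.
Qed.

Lemma notIrhoD (A B : set Lam) : ~ I_rho Fam rho A -> I_rho Fam rho B -> ~ I_rho Fam rho (A `\` B).
Proof.
move=> nA IB IAB; apply: nA; apply: (Irho_sub (B := A) (A := (A `\` B) `|` B)).
  by move=> x Ax; case: (pselect (B x)) => ?; [right|left].
exact: Irho_U.
Qed.

Lemma rho_notIrho F : Fam F -> ~ I_rho Fam rho (rho F).
Proof. by move=> FF IF; apply: (IF F FF). Qed.

Lemma rho_mono E F : Fam E -> Fam F -> E `<=` F -> rho E `<=` rho F.
Proof. by case: Hpr => _ [HM _ _]; apply: HM. Qed.

Lemma FamD F K : Fam F -> finite_set K -> Fam (F `\` K).
Proof. by case: Hpr => [[_ _ HD _] _]; apply: HD. Qed.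

End Irho.

Set Implicit Arguments. Unset Strict Implicit. Unset Printing Implicit Defensive.

Lemma I01E (R : realType) (x : R) : (`[0, 1]%classic : set R) x <-> 0 <= x <= 1.
Proof. by rewrite /= in_itv /=. Qed.

Lemma approxQI (R : realType) (x d : R) : 0 <= x <= 1 -> 0 < d ->
  exists q : QI, `|ratr (sval q) - x| < d.
Proof.
move=> /andP[x0 x1] d0.
have lohi : Num.max 0 (x - d) < Num.min 1 (x + d).
  rewrite gt_max !lt_min ltr01 /=.
  apply/and3P; split.
  - by rewrite (le_lt_trans x0) // ltrDl.
  - by rewrite ltrBlDr (le_lt_trans x1) // ltrDl.
  - by rewrite ltrBlDr -addrA ltrDl addr_gt0.
have [q] := rat_in_itvoo lohi; rewrite in_itv /= => /andP[].
rewrite gt_max lt_min => /andP[q0 qd] /andP[q1 qd'].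
have qI : (0 <= q <= 1)%R.
  by rewrite -(ler_rat R 0) -(ler_rat R q 1) rmorph0 rmorph1 !ltW.
exists (exist _ q qI) => /=.
rewrite ltr_norml; apply/andP; split; lra.
Qed.

Lemma ballRE (R : realType) (x e y : R) : ball x e y = (`|x - y| < e).
Proof. by rewrite -ball_normE. Qed.

Lemma QI_01 (R : realType) (q : QI) : 0 <= (ratr (sval q) : R) <= 1.
Proof.
case: q => q /= /andP[q0 q1].
by rewrite ler0q -(ler_rat R q 1) rmorph1 in q0 q1 *; rewrite q0 q1.
Qed.

Lemma partA (R : realType) Lam Om (Fam : set (set Om)) (rho : set Om -> set Lam) :
  FinBW_on Fam rho (`[0, 1]%classic : set R) ->
  ~ katetov_le (rho_ideal_dom (conv_ideal R)) (@rho_ideal_map QI) Fam rho.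
Proof.
move=> H2 [g Hg].
pose f l : R := ratr (sval (g l)).
have fI l : (`[0,1]%classic : set R) (f l) by rewrite I01E; apply: QI_01.
have [F1 [FF1 [x /I01E x01 cv]]] := H2 f fI.
have [F2 nF2 HK] := Hg F1 FF1.
apply: nF2.
have hap k : exists q : QI, `|ratr (sval q) - x| < k.+1%:R^-1.
  by apply: approxQI.
pose ap k := projT1 (cid (hap k)).
have apP k : `|ratr (sval (ap k)) - x| < k.+1%:R^-1 := projT2 (cid (hap k)).
pose s k := if pickle_inv k is Some q then (if `[< F2 q >] then q else ap k) else ap k.
exists 1%N, (fun _ => s); split; last first.
  move=> q F2q; exists ord0 => //; exists (choice.pickle q) => //.
  by rewrite /s pickleK_inv; case: asboolP.
move=> _; exists x; apply/cvgrPdist_lt => e e0.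
have [K [fK sub]] := cv _ (nbhsx_ballx x e e0).
have [K2 [fK2 sub2]] := HK K fK.
have [N1 hN1] := finite_nat_bound (finite_image choice.pickle fK2).
have [N2 _ hN2] := near_infty_natSinv_lt (PosNum e0).
exists (maxn N1 N2) => // k /=; rewrite geq_max => /andP[k1 k2].
have apk : `|x - ratr (sval (ap k))| < e.
  rewrite distrC (lt_trans (apP k)) //.
  exact: hN2.
rewrite /s; case ek: (pickle_inv k) => [q|] //.
case: asboolP => // F2q.
have pq : choice.pickle q = k by have := @pickle_invK QI k; rewrite ek.
have nK2 : ~ K2 q.
  move=> K2q; have := hN1 k; rewrite -pq => /(_ (ex_intro2 _ _ q K2q erefl)).
  by rewrite pq ltnNge k1.
have [l rl <-] := sub2 q (conj F2q nK2).
by rewrite -ballRE; apply: sub; exists l.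
Qed.

Set Implicit Arguments. Unset Strict Implicit. Unset Printing Implicit Defensive.

Section I01type.
Variable R : realType.
Definition A01 : set R := `[0, 1]%classic.
Definition T01 : pseudoMetricType R := (A01 : Type).
Lemma A01_0 : (0:R) \in A01. Proof. by apply/mem_set; rewrite /A01 I01E lexx ler01. Qed.
HB.instance Definition _ := isPointed.Build (set_type A01) (exist _ 0 A01_0).

Lemma T01_ball (x : T01) e (y : T01) : ball x e y = ball (val x) e (val y).
Proof. by []. Qed.

Lemma T01_hausdorff : hausdorff_space T01.
Proof.
rewrite ball_hausdorff => a b ab.
have vab : val a != val b by apply: contra ab => /eqP /val_inj ->.
have d0 : 0 < `|val a - val b| / 2 by rewrite divr_gt0 // normr_gt0 subr_eq0.
exists (PosNum d0, PosNum d0) => /=; apply/eqP/seteqP; split => // z [].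
rewrite !T01_ball !ballRE => h1 h2.
have : `|val a - val b| < `|val a - val b| / 2 + `|val a - val b| / 2.
  rewrite (le_lt_trans (ler_distD (val z) _ _)) // (ltrD h1) // distrC //.
by rewrite -splitr ltxx.
Qed.

Lemma T01_compact : compact [set: T01].
Proof.
rewrite (@compact_cover (set_type A01)) => I D f fop cov.
have hO : forall i, exists Ob : set R, D i -> open Ob /\ val @^-1` Ob = f i.
  move=> i; case: (pselect (D i)) => Di; last by exists setT.
  have [Ob Oop OE] := fop i Di; by exists Ob.
have [Ob hO'] := choice hO.
have := @segment_compact R 0 1; rewrite compact_cover => /(_ I D Ob).
case.
- by move=> i Di; case: (hO' i Di).
- move=> x x01.
  have [i Di fi] := cov (exist _ x (mem_set x01)) Logic.I.
  exists i => //; case: (hO' i Di) => _ OE; rewrite -OE in fi; exact: fi.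
move=> D' D'D cov'; exists D' => // y _.
have [i Di Oi] := cov' (val y) (set_mem (valP y)).
exists i => //; case: (hO' i (set_mem (D'D _ Di))) => _ <-; exact: Oi.
Qed.
End I01type.

Lemma partB (R : realType) Lam Om (Fam : set (set Om)) (rho : set Om -> set Lam) :
  (forall X : pseudoMetricType R, hausdorff_space X ->
                 (FinBW Fam rho X <-> compact [set: X])) ->
  FinBW_on Fam rho (`[0, 1]%classic : set R).
Proof.
move=> H1 f fI.
have := (H1 (T01 R) (@T01_hausdorff R)).2 (@T01_compact R).
pose g l : T01 R := exist _ (f l) (mem_set (fI l)).
move=> /(_ g (fun _ => I)) [F [FF [x _ cv]]].
exists F; split => //; exists (val x); first exact: (set_mem (valP x)).
move=> U Ux.
have : nbhs x (val @^-1` U) by apply: initial_continuous.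
move=> /cv [K [fK sub]]; exists K; split => //.
by move=> _ [l rl <-]; apply: (sub (g l)); exists l.
Qed.

Set Implicit Arguments. Unset Strict Implicit. Unset Printing Implicit Defensive.

Lemma big_setI_seq T (I : eqType) (s : seq I) (A : I -> set T) (y : T) :
  (\big[setI/setT]_(c <- s) A c) y <-> (forall c, c \in s -> A c y).
Proof.
elim: s => [|c s IH]; first by rewrite big_nil; split => // _ c.
rewrite big_cons; split.
  by move=> [Ac /IH h] d; rewrite in_cons => /orP[/eqP ->|/h].
move=> h; split; first by apply: h; rewrite in_cons eqxx.
by apply/IH => d ds; apply: h; rewrite in_cons ds orbT.
Qed.

Lemma filter_big_setI_seq T I (F : set_system T) {FF : Filter F} (s : seq I) (A : I -> set T) :
  (forall c, F (A c)) -> F (\big[setI/setT]_(c <- s) A c).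
Proof.
move=> FA; elim: s => [|c s IH]; first by rewrite big_nil; apply: filterT.
by rewrite big_cons; apply: filterI.
Qed.

Section seqcompact.
Variables (R : realType) (X : pseudoMetricType R).
Hypothesis clus : forall s : nat -> X, exists x : X, forall e : R, 0 < e ->
  forall N, exists2 k, (N <= k)%N & ball x e (s k).

Lemma ultra_TB (U : set_system X) : UltraFilter U -> forall r : R, 0 < r ->
  exists c, U (ball c r).
Proof.
move=> UU r r0; apply: contrapT => nex.
have nb c : U (~` ball c r).
  by case: (in_ultra_setVsetC (ball c r) UU) => // h; exfalso; apply: nex; exists c.
have ex (L : seq X) : exists y, (\big[setI/setT]_(c <- L) ~` ball c r) y.
  exact: (@filter_ex X U _ _ (filter_big_setI_seq L nb)).
pose nxt L := projT1 (cid (ex L)).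
have nxtP L : (\big[setI/setT]_(c <- L) ~` ball c r) (nxt L) := projT2 (cid (ex L)).
pose LL k := iter k (fun L => nxt L :: L) [::].
pose s k := nxt (LL k).
have mem j k : (j < k)%N -> s j \in LL k.
  elim: k => [|k IH] //=.
  rewrite ltnS leq_eqVlt => /orP[/eqP ->|/IH h].
    by rewrite in_cons eqxx.
  by rewrite in_cons h orbT.
have [x hx] := clus s.
have r20 : 0 < r / 2 by rewrite divr_gt0.
have [j _ hj] := hx _ r20 0%N.
have [k jk hk] := hx _ r20 j.+1.
have := (big_setI_seq _ _ _).1 (nxtP (LL k)) _ (mem _ _ jk).
apply; rewrite [r]splitr; apply: ball_triangle (ball_sym hj) hk.
Qed.

Lemma ultra_cvg (U : set_system X) : UltraFilter U -> exists x : X, U --> x.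
Proof.
move=> UU.
have hc n : exists c, U (ball c (n.+1%:R^-1)) by apply: ultra_TB.
pose c n := projT1 (cid (hc n)).
have cP n : U (ball (c n) (n.+1%:R^-1)) := projT2 (cid (hc n)).
have ex (n : nat) : exists y : X, (\big[setI/setT]_(j <- iota 0 n.+1) ball (c j) (j.+1%:R^-1)) y.
  exact: (@filter_ex X U _ _ (filter_big_setI_seq _ (fun j => cP j))).
pose s n := projT1 (cid (ex n)).
have sP n j : (j <= n)%N -> ball (c j) (j.+1%:R^-1) (s n).
  move=> jn; have := (big_setI_seq _ _ _).1 (projT2 (cid (ex n))) j; apply.
  by rewrite mem_iota /= add0n ltnS jn.
have [x hx] := clus s.
exists x => V /nbhs_ballP [e /= e0 eV].
have e40 : 0 < e / 4 by rewrite divr_gt0.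
have [n _ hn] := near_infty_natSinv_lt (PosNum e40).
have [k nk hk] := hx _ (divr_gt0 e0 (ltr0Sn _ 1)) n.
apply: (filterS _ (cP n)) => y hy; apply: eV.
have hnn : n.+1%:R^-1 < e / 4 := hn n (leqnn n).
have := ball_triangle (ball_triangle hk (ball_sym (sP k n nk))) hy.
apply: le_ball; rewrite /=; set t := n.+1%:R^-1 in hnn *; lra.
Qed.

Lemma seq_compact : compact [set: X].
Proof.
rewrite compact_ultra => F UF _.
by have [x Fx] := ultra_cvg UF; exists x.
Qed.
End seqcompact.

Lemma FinBW_clus (R : realType) Lam Om (Fam : set (set Om)) (rho : set Om -> set Lam)
  (Hpr : partition_regular Fam rho) (Lam_cnt : countable [set: Lam])
  (X : pseudoMetricType R) : FinBW Fam rho X ->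
  forall s : nat -> X, exists x : X, forall e : R, 0 < e ->
  forall N, exists2 k, (N <= k)%N & ball x e (s k).
Proof.
move=> H s; have /countable_injP [en eninj] := Lam_cnt.
have [F [FF [x _ cv]]] := H (s \o en) (fun _ => I).
exists x => e e0 N.
have [K [fK sub]] := cv _ (nbhsx_ballx x e e0).
apply: contrapT => nk.
have FK := FamD Hpr FF fK.
case: Hpr => [[_ _ _ inf] _]; apply: (inf _ FK).
apply: (@sub_finite_set _ _ (en @^-1` `I_N)); last first.
  by apply: finite_preimage => // a b _ _; apply: eninj; rewrite in_setT.
move=> l rl /=; rewrite ltnNge; apply/negP => Nl; apply: nk; exists (en l) => //.
by apply: sub; exists l.
Qed.

Lemma partC1 (R : realType) Lam Om (Fam : set (set Om)) (rho : set Om -> set Lam)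
  (Hpr : partition_regular Fam rho) (Lam_cnt : countable [set: Lam])
  (X : pseudoMetricType R) : FinBW Fam rho X -> compact [set: X].
Proof. by move=> H; apply: seq_compact; apply: FinBW_clus H. Qed.

Set Implicit Arguments. Unset Strict Implicit. Unset Printing Implicit Defensive.

Section Phi.
Variable R : realType.
Definition q3 : R := 3^-1.
Definition w3 (n : nat) : R := 2 * q3 ^+ n.+1.
Definition S3 (c : nat -> bool) (N : nat) : R := \sum_(0 <= n < N) (c n)%:R * w3 n.

Lemma q3_ge0 : 0 <= q3. Proof. by rewrite /q3 invr_ge0. Qed.
Lemma q3_gt0 : 0 < q3. Proof. by rewrite /q3 invr_gt0. Qed.
Lemma q3_le1 : q3 <= 1. Proof. by rewrite /q3 invf_le1 // ler1n. Qed.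
Lemma q3E : 3 * q3 = 1. Proof. by rewrite /q3 mulfV. Qed.

Lemma w3_ge0 n : 0 <= w3 n.
Proof. by rewrite /w3 mulr_ge0 // exprn_ge0 // q3_ge0. Qed.

Lemma geo3 a N : (a <= N)%N -> \sum_(a <= n < N) w3 n = q3 ^+ a - q3 ^+ N.
Proof.
elim: N => [|N IH]; first by rewrite leqn0 => /eqP ->; rewrite big_geq // subrr.
rewrite leq_eqVlt => /orP[/eqP ->|aN]; first by rewrite big_geq // subrr.
rewrite big_nat_recr //= IH // /w3 exprS.
have := q3E; set t := q3 ^+ N; set u := q3; move=> h.
have ht : t = 3 * (u * t) by rewrite mulrA h mul1r.
set v := u * t in ht *.
set b := u ^+ a; lra.
Qed.

Lemma S3_ge0 c N : 0 <= S3 c N.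
Proof. by rewrite /S3; apply: sumr_ge0 => n _; rewrite mulr_ge0 // w3_ge0. Qed.

Lemma S3_mono c M N : (M <= N)%N -> S3 c M <= S3 c N.
Proof.
move=> MN; rewrite /S3 (big_cat_nat (leq0n M) MN) /= lerDl.
by apply: sumr_ge0 => n _; rewrite mulr_ge0 // w3_ge0.
Qed.

Lemma S3_le c M N : S3 c N <= S3 c M + q3 ^+ M.
Proof.
case: (leqP N M) => [NM|MN].
  by rewrite (le_trans (S3_mono c NM)) // lerDl exprn_ge0 // q3_ge0.
rewrite /S3 (big_cat_nat (leq0n M) (ltnW MN)) /= lerD2l.
apply: (@le_trans _ _ (\sum_(M <= n < N) w3 n)).
  apply: ler_sum => n _; rewrite ler_piMl ?w3_ge0 //; by case: (c n).
by rewrite geo3 ?(ltnW MN) // gerDl oppr_le0 exprn_ge0 // q3_ge0.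
Qed.

Definition phi3 (c : nat -> bool) : R := sup (range (S3 c)).

Lemma phi3_ub c : has_ubound (range (S3 c)).
Proof. by exists (S3 c 0 + q3 ^+ 0) => _ [N _ <-]; apply: S3_le. Qed.

Lemma phi3_ge c N : S3 c N <= phi3 c.
Proof. by apply: (ub_le_sup (phi3_ub c)); exists N. Qed.

Lemma phi3_le c M : phi3 c <= S3 c M + q3 ^+ M.
Proof. by apply: ge_sup; [exists (S3 c 0); exists 0%N|move=> _ [N _ <-]; apply: S3_le]. Qed.

Lemma phi3_01 c : 0 <= phi3 c <= 1.
Proof.
apply/andP; split; first exact: le_trans (S3_ge0 c 0) (phi3_ge c 0).
by rewrite (le_trans (phi3_le c 0)) // /S3 big_geq // add0r expr0.
Qed.

Lemma phi3_sep1 c d m : (forall i, (i < m)%N -> c i = d i) -> c m = true -> d m = false ->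
  q3 ^+ m.+1 <= phi3 c - phi3 d.
Proof.
move=> cd cm dm.
have h1 := phi3_ge c m.+1; have h2 := phi3_le d m.+1.
have e : S3 c m = S3 d m.
  by rewrite /S3; apply: eq_big_nat => n /andP[_ nm]; rewrite cd.
rewrite /S3 big_nat_recr //= -/(S3 c m) in h1.
rewrite /S3 big_nat_recr //= -/(S3 d m) in h2.
rewrite cm dm e /w3 /= mul1r mul0r addr0 in h1 h2.
move: h1 h2; set a := S3 d m; set t := q3 ^+ m.+1; set x := phi3 c; set y := phi3 d.
move=> h1 h2; lra.
Qed.

Lemma phi3_sep c d m : (forall i, (i < m)%N -> c i = d i) -> c m != d m ->
  q3 ^+ m.+1 <= `|phi3 c - phi3 d|.
Proof.
move=> cd; case cm: (c m); case dm: (d m) => // _.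
  by rewrite (le_trans (phi3_sep1 cd cm dm)) // ler_norm.
rewrite distrC (le_trans _ (ler_norm _)) // phi3_sep1 // => i im.
by rewrite cd.
Qed.
End Phi.

Set Implicit Arguments. Unset Strict Implicit. Unset Printing Implicit Defensive.

Section Gfilter.
Variables (Lam Om : Type) (Fam : set (set Om)) (rho : set Om -> set Lam).
Hypothesis Hpr : partition_regular Fam rho.

Definition Gf (F : set Om) : set_system Lam :=
  filter_from [set K : set Om | finite_set K] (fun K => rho (F `\` K)).

Lemma Gf_filter F : Fam F -> Filter (Gf F).
Proof.
move=> FF; apply: filter_from_filter; first by exists set0; apply: finite_set0.
move=> K1 K2 f1 f2; exists (K1 `|` K2); first by rewrite /= finite_setU.
have fU : finite_set (K1 `|` K2) by rewrite finite_setU.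
move=> l rl; split.
  apply: (rho_mono Hpr (FamD Hpr FF fU) (FamD Hpr FF f1) _ rl).
  by move=> o [Fo nK]; split => // ?; apply: nK; left.
apply: (rho_mono Hpr (FamD Hpr FF fU) (FamD Hpr FF f2) _ rl).
by move=> o [Fo nK]; split => // ?; apply: nK; right.
Qed.

Lemma rho_convE (T : topologicalType) (f : Lam -> T) F (x : T) :
  rho_converges rho f F x <-> (f @ Gf F --> x).
Proof.
split.
  by move=> h U /h [K [fK sub]]; exists K => // l rl; apply: sub; exists l.
by move=> h U /h [K fK sub]; exists K; split => // _ [l rl <-]; exact: sub.
Qed.
End Gfilter.

Lemma FinBW_cantor (R : realType) Lam Om (Fam : set (set Om)) (rho : set Om -> set Lam)
  (Hpr : partition_regular Fam rho) :
  FinBW_on Fam rho (`[0, 1]%classic : set R) -> FinBW Fam rho cantor_space.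
Proof.
move=> H2 f _.
have [F [FF [y _ cv]]] := H2 (fun l => phi3 R (f l)) (fun l => (I01E _).2 (phi3_01 R _)).
have hK N : exists K, finite_set K /\ forall l, rho (F `\` K) l ->
    `|y - phi3 R (f l)| < q3 R ^+ N.+1 / 2.
  have e0 : 0 < q3 R ^+ N.+1 / 2 by rewrite divr_gt0 // exprn_gt0 // q3_gt0.
  have [K [fK sub]] := cv _ (nbhsx_ballx y _ e0).
  by exists K; split => // l rl; rewrite -ballRE; apply: sub; exists l.
have [Kc hKc] := choice hK.
have agree N l l' : rho (F `\` Kc N) l -> rho (F `\` Kc N) l' ->
    forall i, (i <= N)%N -> f l i = f l' i.
  move=> hl hl'; elim/ltn_ind => i IHi iN; apply/eqP; apply: contraT => ne.
  have := phi3_sep R (fun j ji => IHi j ji (leq_trans (ltnW ji) iN)) ne.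
  have := (hKc N).2 l hl; have := (hKc N).2 l' hl'.
  have := ler_wiXn2l (q3_ge0 R) (q3_le1 R) (iN : (i.+1 <= N.+1)%N).
  set a := q3 R ^+ N.+1; set b := q3 R ^+ i.+1.
  move=> ab h1 h2 h3.
  have := ler_distD y (phi3 R (f l)) (phi3 R (f l')).
  rewrite distrC in h2; lra.
have hpt N : exists l, rho (F `\` Kc N) l.
  have FK := FamD Hpr FF (hKc N).1.
  case: Hpr => [[_ _ _ inf] _]; exact/infinite_setN0/inf.
have [pt ptP] := choice hpt.
pose c : cantor_space := fun j => f (pt j) j.
exists F; split => //; exists c => //.
apply/(rho_convE rho f F c); apply/cvg_sup; first by apply: fmap_filter; exact: (Gf_filter Hpr FF).
move=> i U [V] [[W] oW <-] WfN WU.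
exists (Kc i); first exact: (hKc i).1.
move=> l rl; apply: WU; rewrite /= (agree i l (pt i) rl (ptP i) i (leqnn i)); exact: WfN.
Qed.

Section PointedAlias.
Variables (R : realType) (X : pseudoMetricType R) (x0 : X).
Definition PX : Type := X.
HB.instance Definition _ := PseudoMetric.on PX.
HB.instance Definition _ := isPointed.Build PX x0.

Lemma cantor_onto_X : compact [set: X] -> hausdorff_space X ->
  exists f : cantor_space -> X, continuous f /\ forall x, exists c, f c = x.
Proof.
move=> cX hX.
have [f cf] := @cantor_surj R PX cX hX.
exists f; split => // x; have [c _ fc] := (@surj _ _ _ _ f) x I.
by exists c.
Qed.
End PointedAlias.

Lemma partC2 (R : realType) Lam Om (Fam : set (set Om)) (rho : set Om -> set Lam)
  (Hpr : partition_regular Fam rho) :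
  FinBW_on Fam rho (`[0, 1]%classic : set R) ->
  forall X : pseudoMetricType R, hausdorff_space X -> compact [set: X] ->
  FinBW Fam rho X.
Proof.
move=> H2 X hX cX f _.
have [l0 _] : exists l0 : Lam, True.
  case: Hpr => [[[F0 FF0] _ _ inf] _]; have [l _] := infinite_setN0 (inf _ FF0).
  by exists l.
have [h [ch hs]] := cantor_onto_X (f l0) cX hX.
have hg l : exists c, h c = f l by apply: hs.
have [g gP] := choice hg.
have := FinBW_cantor Hpr H2; move=> /(_ g (fun _ => I)) [F [FF [c _ cv]]].
exists F; split => //; exists (h c) => //.
move=> U /ch /cv [K [fK sub]]; exists K; split => //.
by move=> _ [l rl <-]; rewrite -gP; apply: (sub (g l)); exists l.
Qed.

Set Implicit Arguments. Unset Strict Implicit. Unset Printing Implicit Defensive.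

Lemma big_setU_seq T (I : eqType) (s : seq I) (A : I -> set T) (y : T) :
  (\big[setU/set0]_(c <- s) A c) y <-> (exists2 c, c \in s & A c y).
Proof.
elim: s => [|c s IH]; first by rewrite big_nil; split => // -[].
rewrite big_cons; split.
  case=> [Ac|/IH [d ds Ad]]; first by exists c => //; rewrite in_cons eqxx.
  by exists d => //; rewrite in_cons ds orbT.
move=> [d]; rewrite in_cons => /orP[/eqP -> Ac|ds Ad]; first by left.
by right; apply/IH; exists d.
Qed.

Section IrhoUnion.
Variables (Lam Om : Type) (Fam : set (set Om)) (rho : set Om -> set Lam).
Hypothesis Hpr : partition_regular Fam rho.

Lemma Irho_big (I : eqType) (s : seq I) (A : I -> set Lam) :
  (forall c, c \in s -> I_rho Fam rho (A c)) ->
  I_rho Fam rho (\big[setU/set0]_(c <- s) A c).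
Proof.
elim: s => [|c s IH] h; first by rewrite big_nil; exact: Irho0.
rewrite big_cons; apply: Irho_U => //; first by apply: h; rewrite in_cons eqxx.
by apply: IH => d ds; apply: h; rewrite in_cons ds orbT.
Qed.

Lemma Irho_fset (I : choiceType) (D : {fset I}) (A : I -> set Lam) :
  (forall c, c \in D -> I_rho Fam rho (A c)) ->
  I_rho Fam rho (\bigcup_(c in [set` D]) A c).
Proof.
move=> h; apply: (Irho_sub (A := \big[setU/set0]_(c <- enum_fset D) A c)).
  by move=> l [c cD Acl]; apply/big_setU_seq; exists c.
by apply: Irho_big => c cD; apply: h.
Qed.
End IrhoUnion.

Lemma bigmin_seq_le (R : realType) (T : eqType) (s : seq T) (F : T -> R) x :
  x \in s -> \big[Order.min/1]_(i <- s) F i <= F x.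
Proof.
elim: s => // a s IH; rewrite in_cons big_cons => /orP[/eqP ->|xs].
  by rewrite ge_min lexx.
by rewrite ge_min (IH xs) orbT.
Qed.

Lemma bigmin_seq_gt0 (R : realType) (T : Type) (s : seq T) (F : T -> R) :
  (forall x, 0 < F x) -> 0 < \big[Order.min/1]_(i <- s) F i.
Proof.
move=> h; elim: s => [|a s IH]; first by rewrite big_nil ltr01.
by rewrite big_cons lt_min h IH.
Qed.

Section PartD.
Variables (R : realType) (Lam Om : Type) (Fam : set (set Om)) (rho : set Om -> set Lam).
Hypothesis Hpr : partition_regular Fam rho.
Hypothesis HP : P_minus Fam rho.
Variable f : Lam -> R.
Hypothesis fI : forall l, 0 <= f l <= 1.
Hypothesis nconv : forall F x, Fam F -> 0 <= x <= 1 -> ~ rho_converges rho f F x.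

Local Notation Ir := (I_rho Fam rho).

Definition Bs E x e := [set l | rho E l /\ `|x - f l| < e].
Definition Lc E x := 0 <= x <= 1 /\ forall e, 0 < e -> ~ Ir (Bs E x e).

Lemma D2 E : Fam E -> exists x, Lc E x.
Proof.
move=> FE; apply: contrapT => nL.
have hx x : exists eps : R, 0 < eps /\ (0 <= x <= 1 -> Ir (Bs E x eps)).
  case: (boolP (0 <= x <= 1)) => x01; last by exists 1; split => //.
  apply: contrapT => nex; apply: nL; exists x; split => // eps eps0 Ieps.
  by apply: nex; exists eps; split.
have [ep hep] := choice hx.
have := @segment_compact R 0 1; rewrite compact_cover.
move=> /(_ R (`[0, 1]%classic : set R) (fun x => ball x (ep x))).
case.
- by move=> x _; apply: ball_open.
- by move=> x x01; exists x => //; apply: ballxx; case: (hep x).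
move=> D' D'sub cov.
apply: (@rho_notIrho _ _ Fam rho E FE).
apply: (Irho_sub (A := \bigcup_(x in [set` D']) Bs E x (ep x))).
  move=> l rl; have [x xD bx] := cov (f l) ((I01E _).2 (fI l)).
  by exists x => //; rewrite /Bs /=; split => //; apply: rl.
apply: (Irho_fset Hpr) => // x xD; case: (hep x) => _; apply.
by apply/I01E; apply: set_mem; apply: D'sub.
Qed.

Lemma Lc_sub E E' x : Fam E -> Fam E' -> rho E' `<=` rho E -> Lc E' x -> Lc E x.
Proof.
move=> _ _ sub [x01 h]; split => // eps eps0 I1; apply: (h eps eps0).
by apply: Irho_sub I1 => l [rl dl]; split => //; apply: sub.
Qed.

Lemma D3 E x r : Fam E -> Lc E x -> 0 < r -> exists y, [/\ Lc E y, y != x & `|y - x| < r].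
Proof.
move=> FE [x01 Lx] r0.
pose A n := Bs E x (r / n.+2%:R).
have Adec n : A n.+1 `<=` A n.
  move=> l [rl dl]; split => //; apply: lt_le_trans dl _.
  by rewrite ler_pM2l // lef_pV2 ?posrE // ler_nat.
have A0 : ~ Ir (A 0%N) by apply: Lx; rewrite divr_gt0.
case: (pselect (forall n, Ir (A n `\` A n.+1))) => [hall|].
  have [F' [FF' sF'] hK] := HP Adec A0 hall.
  exfalso; apply: (nconv FF' x01) => U /nbhs_ballP [eps /= eps0 bU].
  have e0 : 0 < eps / r by rewrite divr_gt0.
  have [N _ hN] := near_infty_natSinv_lt (PosNum e0).
  have [K [fK sK]] := hK N; exists K; split => // _ [l rl <-].
  apply: bU; rewrite ballRE; have [_ dl] := sK l rl.
  apply: (lt_trans dl); have := hN N (leqnn N) => /=.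
  rewrite ltr_pdivlMr // => h.
  have h1 : N.+2%:R^-1 <= N.+1%:R^-1 :> R by rewrite lef_pV2 ?posrE ?ltr0n // ler_nat.
  by rewrite (le_lt_trans _ h) // [X in _ <= X]mulrC ler_pM2l.
move=> /existsNP [n nI].
have [E' FE' sE'] := notIrhoP nI.
have [y [y01 Ly]] := D2 FE'.
have sEE' : rho E' `<=` rho E by move=> l /sE' [[]].
exists y; split.
- exact: (Lc_sub FE FE' sEE' (conj y01 Ly)).
- apply/negP => /eqP yx; subst y.
  have e0 : 0 < r / n.+3%:R by rewrite divr_gt0.
  apply: (Ly _ e0); apply: (Irho_sub (A := set0)); last exact: (Irho0 Hpr).
  by move=> l [rl dl]; have [[rEl _] nA] := sE' l rl; apply: nA; split.
- have h : `|y - x| <= r / n.+2%:R.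
    rewrite leNgt; apply/negP => hyx.
    have e0 : 0 < `|y - x| - r / n.+2%:R by rewrite subr_gt0.
    apply: (Ly _ e0); apply: (Irho_sub (A := set0)); last exact: (Irho0 Hpr).
    move=> l [rl dl]; have [[_ dx] _] := sE' l rl.
    have := ler_distD (f l) y x; rewrite (distrC (f l) x) => t.
    move: dl dx t; set a := `|y - x|; set b := `|y - f l|; set c := `|x - f l|.
    set d := r / n.+2%:R; lra.
  apply: le_lt_trans h _; rewrite ltr_pdivrMr ?ltr0n // ltr_pMr //.
  by rewrite ltr1n.
Qed.

Lemma D4 F : Fam F -> exists y : nat -> R, injective y /\ forall i, Lc F (y i).
Proof.
move=> FF; have [x0 Lx0] := D2 FF.
have hn r : exists y, 0 < r -> [/\ Lc F y, y != x0 & `|y - x0| < r].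
  case: (boolP (0 < r)) => r0; last by exists x0.
  by have [y hy] := D3 FF Lx0 r0; exists y.
have [nx nxP] := choice hn.
pose y i := iter i (fun v => nx `|v - x0|) (nx 1).
have yS i : y i.+1 = nx `|y i - x0| by [].
have yP i : Lc F (y i) /\ 0 < `|y i - x0|.
  elim: i => [|i [_ IH]].
    have [L1 n1 _] := nxP 1 ltr01; split => //.
    by rewrite normr_gt0 subr_eq0.
  rewrite yS; have [L1 n1 _] := nxP _ IH; split => //.
  by rewrite normr_gt0 subr_eq0.
have dec i : `|y i.+1 - x0| < `|y i - x0|.
  by rewrite yS; have [_ _] := nxP _ (yP i).2.
have decl i k : `|y (i + k.+1)%N - x0| < `|y i - x0|.
  elim: k => [|k IH]; first by rewrite addn1.
  by rewrite addnS (lt_trans (dec _)).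
exists y; split; last by move=> i; case: (yP i).
move=> i j yij; apply/eqP; case: (ltngtP i j) => // ij; exfalso.
- have := decl i (j - i.+1)%N; rewrite addnS -addSn subnKC // yij.
  by rewrite ltxx.
- have := decl j (i - j.+1)%N; rewrite addnS -addSn subnKC // yij.
  by rewrite ltxx.
Qed.


Variable e : Lam -> nat.
Hypothesis einj : injective e.

Lemma D5 c : 0 <= c <= 1 -> Ir [set l | `|f l - c| < (e l).+1%:R^-1].
Proof.
move=> c01; apply: contrapT => nI.
have [E FE sE] := notIrhoP nI.
have [F' [FF' F'E HF']] : exists F', [/\ Fam F', F' `<=` E &
    forall a, rho F' a -> exists K, finite_set K /\ ~ rho (F' `\` K) a].
  by case: Hpr => _ [_ _ HS]; apply: HS.
apply: (nconv FF' c01) => U /nbhs_ballP [eps /= eps0 bU].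
have [N _ hN] := near_infty_natSinv_lt (PosNum eps0).
pose Bad := [set l | rho F' l /\ (e l < N)%N].
have fBad : finite_set Bad.
  apply: (@sub_finite_set _ _ (e @^-1` `I_N)); first by move=> l [].
  by apply: finite_preimage => // a b _ _; apply: einj.
have hK a : exists K, Bad a -> finite_set K /\ ~ rho (F' `\` K) a.
  case: (pselect (Bad a)) => [[ra _]|nb]; last by exists set0.
  by have [K [fK nK]] := HF' a ra; exists K.
have [Ka hKa] := choice hK.
have fK : finite_set (\bigcup_(a in Bad) Ka a).
  by apply: bigcup_finite => // a Ba; case: (hKa a Ba).
exists (\bigcup_(a in Bad) Ka a); split => //.
move=> _ [l rl <-]; apply: bU; rewrite ballRE.
have rl' : rho F' l.
  by apply: (rho_mono Hpr (FamD Hpr FF' fK) FF' _ rl) => o [].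
case: (ltnP (e l) N) => [lN|Nl].
  exfalso; have Bl : Bad l by split.
  have [fKl nKl] := hKa l Bl; apply: nKl.
  apply: (rho_mono Hpr (FamD Hpr FF' fK) (FamD Hpr FF' fKl) _ rl).
  by move=> o [F'o nK]; split => // Ko; apply: nK; exists l.
have rE : rho E l by apply: (rho_mono Hpr FF' FE F'E rl').
have := sE l rE => /= h.
have h2 : (e l).+1%:R^-1 <= N.+1%:R^-1 :> R.
  by rewrite lef_pV2 ?posrE ?ltr0n // ler_nat.
have := hN N (leqnn N) => /= h3.
rewrite distrC; apply: (lt_le_trans h); apply: (le_trans h2); exact: ltW.
Qed.

Variable g : Lam -> QI.
Hypothesis gP : forall l, `|ratr (sval (g l)) - f l| < (e l).+1%:R^-1.

Lemma D6 c : 0 <= c <= 1 -> Ir [set l | ratr (sval (g l)) = c :> R].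
Proof.
move=> c01; apply: Irho_sub (D5 c01) => l /= <-.
by rewrite distrC gP.
Qed.


Hypothesis Hsa : small_accretions Fam rho.
Variable idx : Om -> nat.
Hypothesis idxinj : injective idx.

Lemma D7 : katetov_le (rho_ideal_dom (conv_ideal R)) (@rho_ideal_map QI) Fam rho.
Proof.
exists g => F1 FF1.
have [F [FF FF1sub acc]] := Hsa FF1.
have [y [yinj Ly]] := D4 FF.
pose Kn n := idx @^-1` `I_n.
have fKn n : finite_set (Kn n).
  by apply: finite_preimage => // a b _ _; apply: idxinj.
pose P m i z := [/\ rho (F `\` Kn (m + i)%N) z, `|y i - f z| < m.+1%:R^-1,
   (m <= e z)%N & ratr (sval (g z)) != y i].
have hz m i : exists z, P m i z.
  have nB : ~ Ir (Bs F (y i) m.+1%:R^-1) by apply: (Ly i).2; rewrite invr_gt0 ltr0n.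
  have I1 : Ir (rho F `\` rho (F `\` Kn (m + i)%N)) := acc _ (fKn _).
  have I2 : Ir (e @^-1` `I_m).
    apply: (Irho_finite Hpr); apply: finite_preimage => // a b _ _; exact: einj.
  have I3 : Ir [set l | ratr (sval (g l)) = y i] := D6 (Ly i).1.
  have := notIrhoD Hpr nB (Irho_U Hpr I1 (Irho_U Hpr I2 I3)).
  move=> /(notIrho_n0 Hpr) [z [[rz dz] nz]].
  exists z; split.
  - by apply: contrapT => nr; apply: nz; left; split.
  - exact: dz.
  - by rewrite leqNgt; apply/negP => zm; apply: nz; right; left.
  - by apply/eqP => eq; apply: nz; right; right.
have hz' m : exists zm : nat -> Lam, forall i, P m i (zm i).
  by have [zm hzm] := choice (hz m); exists zm.
have [z zP] := choice hz'.
pose F2 := [set q | exists m i, q = g (z m i)].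
exists F2; last first.
  move=> K1 fK1; have [N hN] := finite_nat_bound (finite_image idx fK1).
  exists [set g (z p.1 p.2) | p in `I_N `*` `I_N]; split.
    by apply: finite_image; apply: finite_setX.
  move=> _ [[m [i ->]] nK2]; rewrite /rho_ideal_map.
  case: (ltnP (m + i) N) => [mi|Nmi].
    exfalso; apply: nK2; exists (m, i) => //; split => /=.
    - exact: leq_ltn_trans (leq_addr i m) mi.
    - exact: leq_ltn_trans (leq_addl m i) mi.
  exists (z m i) => //; have [rz _ _ _] := zP m i.
  apply: (rho_mono Hpr (FamD Hpr FF (fKn _)) (FamD Hpr FF1 fK1) _ rz).
  move=> o [Fo nKo]; split; first exact: FF1sub.
  move=> K1o; apply: nKo; rewrite /Kn /=.
  have := hN (idx o) (ex_intro2 _ _ o K1o erefl) => io.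
  exact: leq_trans io Nmi.
move=> [p [s [scv cov]]].
have [lim limP] := choice scv.
have [i0 hi0] : exists i0, forall r, y i0 != lim r.
  apply: contrapT => nex.
  have hr i : exists r, y i = lim r.
    apply: contrapT => nr; apply: nex; exists i => r; apply/eqP => e1.
    by apply: nr; exists r.
  have [rr rrP] := choice hr.
  have inj : injective (fun k : 'I_p.+1 => rr (val k)).
    by move=> a b /= hab; apply: val_inj; apply: yinj; rewrite rrP hab -rrP.
  by have := leq_card _ inj; rewrite !card_ord ltnn.
pose del r := `|y i0 - lim r| / 2.
have del0 r : 0 < del r.
  by rewrite divr_gt0 // normr_gt0 subr_eq0 hi0.
have hN r : exists N, forall k, (N <= k)%N ->
    `|lim r - ratr (sval (s r k))| < del r.
  have := limP r; move/cvgrPdist_lt => /(_ _ (del0 r)) [N _ hN].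
  by exists N => k Nk; apply: hN.
have [Nr NrP] := choice hN.
pose NN := (\max_(r < p) Nr r)%N.
pose d r k := if ratr (sval (s r k)) == y i0 then 1 else `|ratr (sval (s r k)) - y i0|.
have d0 r k : 0 < d r k.
  rewrite /d; case: ifPn => // ne; by rewrite normr_gt0 subr_eq0.
pose eta := \big[Order.min/1]_(r <- enum 'I_p)
   Order.min (del r) (\big[Order.min/1]_(k <- iota 0 NN) d r k).
have eta0 : 0 < eta.
  apply: bigmin_seq_gt0 => r; rewrite lt_min del0 /=.
  exact: bigmin_seq_gt0.
have etad r : eta <= del r.
  apply: le_trans (bigmin_seq_le _ (mem_enum _ r)) _; rewrite ge_min lexx //.
have etak r k : (k < NN)%N -> eta <= d r k.
  move=> kN; apply: le_trans (bigmin_seq_le _ (mem_enum _ r)) _.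
  rewrite ge_min (bigmin_seq_le _ _) ?orbT //.
  by rewrite mem_iota /= add0n.
have eta20 : 0 < eta / 2 by rewrite divr_gt0.
have [m _ hm] := near_infty_natSinv_lt (PosNum eta20).
have hmm := hm m (leqnn m); rewrite /= in hmm.
have [rz dz ez nz] := zP m i0.
set zz := z m i0 in rz dz ez nz.
set v := ratr (sval (g zz)) in nz.
have hv : `|v - y i0| < eta.
  have h1 : `|v - f zz| < m.+1%:R^-1.
    apply: (lt_le_trans (gP zz)).
    by rewrite lef_pV2 ?posrE ?ltr0n // ler_nat.
  have := ler_distD (f zz) v (y i0).
  rewrite (distrC (y i0) (f zz)) in dz.
  move: h1 dz hmm; set t := m.+1%:R^-1; set a := `|v - f zz|; set b := `|f zz - y i0|.
  move=> h1 h2 h3 h4; lra.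
have [r _ [k _ skz]] := cov (g zz) (ex_intro _ m (ex_intro _ i0 erefl)).
case: (leqP NN k) => [Nk|kN].
  have Nrk : (Nr r <= k)%N by apply: leq_trans Nk; exact: leq_bigmax.
  have := NrP r k Nrk; rewrite skz -/v => h1.
  have h3 := etad r; rewrite /del in h3.
  have tri := ler_distD v (y i0) (lim r).
  rewrite (distrC (y i0) v) (distrC v (lim r)) in tri.
  move: hv h1 h3 tri; set A := `|y i0 - lim r|; set B := `|v - y i0|.
  set C := `|lim r - v|; rewrite /del -/A; move=> hv h1 h3 tri; lra.
have := etak r k kN; rewrite /d skz -/v (negbTE nz) => h.
by move: hv; rewrite ltNge h.
Qed.

End PartD.

Set Implicit Arguments. Unset Strict Implicit. Unset Printing Implicit Defensive.

Lemma partD (R : realType) Lam Om (Fam : set (set Om)) (rho : set Om -> set Lam)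
  (Hpr : partition_regular Fam rho) (Hsa : small_accretions Fam rho)
  (Lam_cnt : countable [set: Lam]) (Om_cnt : countable [set: Om]) :
  P_minus Fam rho ->
  ~ katetov_le (rho_ideal_dom (conv_ideal R)) (@rho_ideal_map QI) Fam rho ->
  FinBW_on Fam rho (`[0, 1]%classic : set R).
Proof.
move=> HP H3 f fI; apply: contrapT => nc.
have fI' l : 0 <= f l <= 1 := (I01E _).1 (fI l).
have nconv F x : Fam F -> 0 <= x <= 1 -> ~ rho_converges rho f F x.
  by move=> FF x01 cv; apply: nc; exists F; split => //; exists x => //; apply/I01E.
have /countable_injP [e einj] := Lam_cnt.
have einj' : injective e by move=> a b; apply: einj; rewrite in_setT.
have /countable_injP [idx idxinj] := Om_cnt.
have idxinj' : injective idx by move=> a b; apply: idxinj; rewrite in_setT.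
have hg l : exists q : QI, `|ratr (sval q) - f l| < (e l).+1%:R^-1.
  by apply: approxQI => //; rewrite invr_gt0 ltr0n.
have [g gP] := choice hg.
by apply: H3; exact: (D7 Hpr HP fI' nconv einj' gP Hsa idxinj').
Qed.

Unset Implicit Arguments.

Theorem theorem6p2 (R : realType) (Lam Om : Type)
  (Lam_cnt : countable [set: Lam]) (Lam_inf : infinite_set [set: Lam])
  (Om_cnt : countable [set: Om]) (Om_inf : infinite_set [set: Om])
  (Fam : set (set Om)) (rho : set Om -> set Lam)
  (Hpr : partition_regular Fam rho) (Hsa : small_accretions Fam rho) :
  let cond1 := forall X : pseudoMetricType R, hausdorff_space X ->
                 (FinBW Fam rho X <-> compact [set: X]) in
  let cond2 := FinBW_on Fam rho (`[0, 1] : set R) in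
  let cond3 := ~ katetov_le (rho_ideal_dom (conv_ideal R)) (@rho_ideal_map QI)
                            Fam rho in
  [/\ cond1 <-> cond2, cond2 -> cond3 & P_minus Fam rho -> (cond3 -> cond2)].
Proof.
move=> cond1 cond2 cond3; split.
- split; first exact: partB.
  move=> H2 X hX; split; first by move=> H; apply: (partC1 Hpr Lam_cnt H).
  by move=> cX; apply: (partC2 Hpr H2 hX cX).
- exact: partA.
- exact: partD Hpr Hsa Lam_cnt Om_cnt.
Qed.
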